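(* Let $|\psi\rangle,|\phi\rangle,|e\rangle,|f\rangle$ be unit vectors in $\mathbb{C}^2$ and let $$\tau=\frac12\left((|\psi\rangle\langle\psi|)^T\otimes|e\rangle\langle e|+(|\phi\rangle\langle\phi|)^T\otimes|f\rangle\langle f|\right).$$ Then the singular values of $N(\tau)$ are $$|\langle\psi|\phi\rangle||\langle e|f\rangle|,\quad\sqrt{(1-|\langle\psi|\phi\rangle|^2)(1-|\langle e|f\rangle|^2)},\quad 0.$$
   Context: $^T$ denotes transpose with respect to the computational basis $\{|0\rangle,|1\rangle\}$. The correlation matrix of an operator $X$ on $\mathbb{C}^2\otimes\mathbb{C}^2$ is the real $3\times3$ matrix $N(X)_{ij}=\operatorname{tr}[X(\sigma_i\otimes\sigma_j)]$, $i,j\in\{1,2,3\}$, with $\sigma_i$ the Pauli matrices. *)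

(* Defs.v *)
(* Complex scalars: an arbitrary numClosedFieldType C
   (algebraically closed field with conjugation, e.g. the complex numbers). *)
From HB Require Import structures.
From mathcomp Require Import all_boot all_order all_algebra.
From mathcomp Require Import mxtens.
Set Implicit Arguments. Unset Strict Implicit. Unset Printing Implicit Defensive.
Import Order.TTheory GRing.Theory Num.Theory.
Local Open Scope ring_scope.

Section QDefs.
Variable C : numClosedFieldType.

Definition conjmx m n (A : 'M[C]_(m, n)) : 'M[C]_(m, n) := map_mx Num.conj A.
Definition adjmx m n (A : 'M[C]_(m, n)) : 'M[C]_(n, m) := (conjmx A)^T.

Definition braket (u v : 'cV[C]_2) : C := \sum_(i < 2) (u i 0)^* * v i 0.

Definition unit_vec (u : 'cV[C]_2) : Prop := braket u u = 1.

Definition ketbra (u : 'cV[C]_2) : 'M[C]_2 := u *m adjmx u.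

(* Pauli matrices sigma_1, sigma_2, sigma_3, indexed by k : 'I_3 (k = 0,1,2) *)
Definition pauli (k : 'I_3) : 'M[C]_2 :=
  \matrix_(a < 2, b < 2)
    if (k : nat) == 0%N then (if (a : nat) == b then 0 else 1)
    else if (k : nat) == 1%N then
      (if (a : nat) == b then 0 else if (a : nat) == 0%N then - 'i else 'i)
    else (if (a : nat) == b then (if (a : nat) == 0%N then 1 else -1) else 0).

Definition corr_mx (X : 'M[C]_(2 * 2)) : 'M[C]_3 :=
  \matrix_(i < 3, j < 3) \tr (X *m (pauli i *t pauli j)).

(* s_1,...,s_n are the singular values (with multiplicity) of A:
   they are nonnegative and their squares are the eigenvalues (with
   multiplicity) of A^* A, i.e. char_poly (A^* A) = prod_i (X - s_i^2). *)
Definition singular_values n (A : 'M[C]_n) (s : n.-tuple C) : Prop :=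
  (forall i : 'I_n, 0 <= tnth s i) /\
  char_poly (adjmx A *m A) = \prod_(i < n) ('X - ((tnth s i) ^+ 2)%:P).

End QDefs.

(* Main.v *)
Require Import Defs.
From HB Require Import structures.
From mathcomp Require Import all_boot all_order all_algebra.
From mathcomp Require Import mxtens ring.
Import Order.TTheory GRing.Theory Num.Theory.
Local Open Scope ring_scope.

Lemma det3 (R : comNzRingType) (A : 'M[R]_3) :
  \det A = A 0 0 * A 1 1 * A 2 2 + A 0 1 * A 1 2 * A 2 0 + A 0 2 * A 1 0 * A 2 1
         - A 0 2 * A 1 1 * A 2 0 - A 0 1 * A 1 0 * A 2 2 - A 0 0 * A 1 2 * A 2 1.
Proof.
rewrite (expand_det_row _ 0) !big_ord_recl big_ord0 /cofactor.
rewrite !(expand_det_row _ 0) !big_ord_recl !big_ord0 /cofactor !det_mx11 !mxE.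
have [g Hg] : exists g : nat -> nat -> R, forall i j, A i j = g i j.
  by exists (fun i j => A (inord i) (inord j)) => i j; rewrite !inord_val.
rewrite !Hg /=; ring.
Qed.

Lemma tr_tens (R : comPzRingType) m n (A : 'M[R]_m) (B : 'M[R]_n) :
  \tr (A *t B) = \tr A * \tr B.
Proof.
by rewrite /mxtrace mulr_sum; apply: eq_bigr => k _; rewrite mxE.
Qed.

Lemma char_poly3 (R : comNzRingType) (B : 'M[R]_3) :
  char_poly B = 'X^3 - (B 0 0 + B 1 1 + B 2 2)%:P * 'X^2
   + (B 0 0 * B 1 1 - B 0 1 * B 1 0 + B 0 0 * B 2 2 - B 0 2 * B 2 0
      + B 1 1 * B 2 2 - B 1 2 * B 2 1)%:P * 'X - (\det B)%:P.
Proof.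
rewrite /char_poly (@det3 _ B) det3 /char_poly_mx !mxE /=.
ring.
Qed.

Lemma key (R : numFieldType) (b d : 'I_3 -> R) (A G Cc : R) (F : 'M[R]_3) :
  (forall i j, F i j = 4^-1 * (A * b i * b j + G * (b i * d j + d i * b j) + Cc * d i * d j)) ->
  let bb := \sum_(k < 3) b k * b k in
  let bd := \sum_(k < 3) b k * d k in
  let dd := \sum_(k < 3) d k * d k in
  [/\ F 0 0 + F 1 1 + F 2 2 = 4^-1 * (A * bb + 2 * G * bd + Cc * dd),
      F 0 0 * F 1 1 - F 0 1 * F 1 0 + F 0 0 * F 2 2 - F 0 2 * F 2 0
      + F 1 1 * F 2 2 - F 1 2 * F 2 1 = 16^-1 * ((A * Cc - G ^+ 2) * (bb * dd - bd ^+ 2)) &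
      \det F = 0].
Proof.
move=> HF bb bd dd; rewrite /bb /bd /dd det3 !HF !big_ord_recl !big_ord0.
have [gb Hb] : exists g : nat -> R, forall i, b i = g i.
  by exists (fun i => b (inord i)) => i; rewrite inord_val.
have [gd Hd] : exists g : nat -> R, forall i, d i = g i.
  by exists (fun i => d (inord i)) => i; rewrite inord_val.
rewrite !Hb !Hd /=.
have h4 : (4 : R) != 0 by rewrite pnatr_eq0.
have h16 : (16 : R) != 0 by rewrite pnatr_eq0.
have h16' : (16 : R) = 4 * 4 by rewrite -natrM.
split; rewrite ?h16'. all: field; done.
Qed.

Section S.
Variable C : numClosedFieldType.

Definition bl (T : bool) (u : 'cV[C]_2) (k : 'I_3) : C :=
  \tr ((if T then (ketbra u)^T else ketbra u) *m @pauli C k).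

Lemma bl_dot T (u v : 'cV[C]_2) :
  \sum_(k < 3) bl T u k * bl T v k =
   2 * (braket u v * braket v u) - braket u u * braket v v.
Proof.
rewrite /bl /braket /ketbra /adjmx /conjmx /mxtrace.
have Hi := @sqrCi C.
case: T; rewrite !big_ord_recl !big_ord0 /= !mxE !big_ord_recl !big_ord0 /= !mxE
  !big_ord_recl !big_ord0 /= !mxE /=;
 set a := u _ _; set b := u _ _; set c := v _ _; set d := v _ _;
 rewrite -/a -/b -/c -/d ; ring: Hi.
Qed.

Lemma bl_real T u k : (bl T u k)^* = bl T u k.
Proof.
rewrite /bl /ketbra /adjmx /conjmx /mxtrace.
case: k => [[|[|[|k]]] Hk] //;
case: T; rewrite !big_ord_recl !big_ord0 /= !mxE !big_ord_recl !big_ord0 /= !mxE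
  !big_ord_recl !big_ord0 /= !mxE /= !(rmorphD, rmorphM, rmorphN, rmorph0, rmorph1) /= !(conjCK, conjCi);
  ring.
Qed.

Lemma braket_conj (u v : 'cV[C]_2) : (braket u v)^* = braket v u.
Proof.
rewrite /braket !big_ord_recl !big_ord0 !(rmorphD, rmorphM, rmorph0) /= !conjCK; ring.
Qed.

Lemma lagrange (u v : 'cV[C]_2) : braket u u * braket v v - braket u v * braket v u
   = `|u 0 0 * v 1 0 - u 1 0 * v 0 0| ^+ 2.
Proof.
rewrite normCK /braket !big_ord_recl !big_ord0 !(rmorphD, rmorphM, rmorphN, rmorph0) /= ?conjCK.
set a := u _ _; set b := u _ _; set c := v _ _; set d := v _ _.
rewrite -/a -/b -/c -/d.
have -> : u 1 0 = b by rewrite /b; congr (u _ _); apply: val_inj.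
have -> : v 1 0 = d by rewrite /d; congr (v _ _); apply: val_inj.
ring.
Qed.

End S.

Theorem proposition9 (C : numClosedFieldType) (psi phi e f : 'cV[C]_2) :
  unit_vec psi -> unit_vec phi -> unit_vec e -> unit_vec f ->
  let tau : 'M[C]_(2 * 2) :=
    2^-1 *: ((ketbra psi)^T *t ketbra e + (ketbra phi)^T *t ketbra f) in
  singular_values (corr_mx tau)
    [tuple `|braket psi phi| * `|braket e f|;
           sqrtC ((1 - `|braket psi phi| ^+ 2) * (1 - `|braket e f| ^+ 2));
           0].
Proof.
move=> Hpsi Hphi He Hf tau; rewrite /unit_vec in Hpsi Hphi He Hf.
set M := corr_mx tau.
pose a := bl C true psi; pose c := bl C true phi; pose b := bl C false e; pose d := bl C false f.
have HM : forall i j, \tr (tau *m (pauli C i *t pauli C j)) = 2^-1 * (a i * b j + c i * d j).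
  move=> i j; rewrite /tau -scalemxAl mulmxDl !tensmx_mul.
  by rewrite mxtraceZ mxtraceD !tr_tens.
pose A := \sum_(k < 3) a k * a k.
pose G := \sum_(k < 3) a k * c k.
pose Cc := \sum_(k < 3) c k * c k.
have h4 : (4 : C)^-1 = 2^-1 * 2^-1 by rewrite -invfM -natrM.
have HB : forall i j, (adjmx M *m M) i j =
   4^-1 * (A * b i * b j + G * (b i * d j + d i * b j) + Cc * d i * d j).
  move=> i j; rewrite mxE /adjmx /conjmx.
  under eq_bigr => k _ do rewrite !mxE !HM rmorphM fmorphV rmorph_nat rmorphD !rmorphM /= /a /b /c /d !bl_real.
  rewrite /A /G /Cc /a /b /c /d !big_ord_recl !big_ord0 h4; ring.
have Lp : 1 - `|braket psi phi| ^+ 2 = `|psi 0 0 * phi 1 0 - psi 1 0 * phi 0 0| ^+ 2.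
  by rewrite -(@lagrange C psi phi) Hpsi Hphi mul1r normCK braket_conj.
have Le : 1 - `|braket e f| ^+ 2 = `|e 0 0 * f 1 0 - e 1 0 * f 0 0| ^+ 2.
  by rewrite -(@lagrange C e f) He Hf mul1r normCK braket_conj.
have /= [E1 E2 E3] := @key _ b d A G Cc _ HB.
rewrite /singular_values; split.
  move=> i; case: i => [[|[|[|i]]] Hi] //=; rewrite (tnth_nth 0) /=.
  - by rewrite mulr_ge0 ?normr_ge0.
  - rewrite sqrtC_ge0 Lp Le; apply: mulr_ge0; apply: exprn_ge0; apply: normr_ge0.
rewrite char_poly3 E1 E2 E3 /A /G /Cc /a /b /c /d !bl_dot Hpsi Hphi He Hf.
rewrite !big_ord_recl big_ord0 !(tnth_nth 0) /= sqrtCK exprMn !normCK !braket_conj.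
set P := braket psi phi * braket phi psi.
set Q := braket e f * braket f e.
have n4 : (4 : C) != 0 by rewrite pnatr_eq0.
have n16 : (16 : C) = 4 * 4 by rewrite -natrM.
rewrite (_ : 4^-1 * _ = P * Q + (1 - P) * (1 - Q)); last by field.
rewrite (_ : 16^-1 * _ = (P * Q) * ((1 - P) * (1 - Q))); last by rewrite n16; field.
rewrite expr0n /=.
ring.
Qed.
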